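(* Let $G$ be a connected graph and let $e = \{a,b\}$ be a cut-edge of $G$. Let $G_a$ and $G_b$ be the connected components of $G$ with the edge $e$ removed (containing $a$ and $b$ respectively). Then for any minimal fort $F$ of $G$ with $a, b \notin F$, either $V(G_a) \cap F = \emptyset$ or $V(G_b) \cap F = \emptyset$.
   Context: A fort of a graph $G$ is a nonempty set $F\subseteq V(G)$ such that every vertex outside $F$ is adjacent to either zero or at least two vertices of $F$; it is minimal if no proper subset is a fort. *)

(* Defs.v *)
From mathcomp Require Import all_boot.
Set Implicit Arguments. Unset Strict Implicit. Unset Printing Implicit Defensive.

Definition simple_graph (T : finType) (g : rel T) : Prop :=
  symmetric g /\ irreflexive g.

Definition connected_graph (T : finType) (g : rel T) : Prop :=
  forall x y : T, connect g x y.

Definition nbhd (T : finType) (g : rel T) (v : T) : {set T} := [set u | g v u].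

Definition fort (T : finType) (g : rel T) (F : {set T}) : Prop :=
  F != set0 /\ forall v, v \notin F -> #|nbhd g v :&: F| != 1.

Definition minimal_fort (T : finType) (g : rel T) (F : {set T}) : Prop :=
  fort g F /\ forall F' : {set T}, F' \proper F -> ~ fort g F'.

Definition remove_edge (T : finType) (g : rel T) (a b : T) : rel T :=
  fun x y => g x y && ~~ (((x == a) && (y == b)) || ((x == b) && (y == a))).

Definition cut_edge (T : finType) (g : rel T) (a b : T) : Prop :=
  g a b /\ ~~ connect (remove_edge g a b) a b.

Definition comp_after_removal (T : finType) (g : rel T) (a b x : T) : {set T} :=
  [set y | connect (remove_edge g a b) x y].

(* Main.v *)
Require Import Defs.
From mathcomp Require Import all_boot.

Lemma re_sym (T : finType) (g : rel T) (a b : T) :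
  symmetric g -> symmetric (remove_edge g a b).
Proof.
move=> gs x y; rewrite /remove_edge gs.
by rewrite orbC (andbC (y == a)) (andbC (y == b)).
Qed.

Lemma re_edge (T : finType) (g : rel T) (a b u v : T) :
  u != a -> u != b -> g v u -> remove_edge g a b v u.
Proof.
move=> ua ub gvu; rewrite /remove_edge gvu /=.
by rewrite (negbTE ua) (negbTE ub) !andbF.
Qed.

Theorem mainTheorem6 (T : finType) (g : rel T) (a b : T) (F : {set T}) :
  simple_graph g -> connected_graph g -> cut_edge g a b ->
  minimal_fort g F -> a \notin F -> b \notin F ->
  comp_after_removal g a b a :&: F = set0 \/
  comp_after_removal g a b b :&: F = set0.
Proof.
move=> [gs gi] _ [gab ncab] [[Fn Ff] Fmin] aF bF.
set g' := remove_edge g a b.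
have g's : connect_sym g' by apply: sym_connect_sym; apply: re_sym.
set A := comp_after_removal g a b a.
set B := comp_after_removal g a b b.
case: (eqVneq (A :&: F) set0) => [->|AF]; first by left.
case: (eqVneq (B :&: F) set0) => [->|BF]; first by right.
exfalso.
have key : forall u v, u \in F -> g v u -> (v \in A) = (u \in A).
  move=> u v uF gvu.
  have ua : u != a by apply/eqP => E; rewrite -E uF in aF.
  have ub : u != b by apply/eqP => E; rewrite -E uF in bF.
  have e1 : g' v u by apply: re_edge.
  have e2 : g' u v by rewrite /g' re_sym.
  rewrite /A /comp_after_removal !inE.
  apply/idP/idP => H.
    by apply: connect_trans H (connect1 e1).
  by apply: connect_trans H (connect1 e2).
have nb : forall v, nbhd g v :&: (A :&: F) = if v \in A then nbhd g v :&: F else set0.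
  move=> v; apply/setP => u; rewrite !inE.
  case: ifP => vA.
    rewrite !inE.
    case uF: (u \in F); rewrite ?andbF //.
    case gvu: (g v u) => //=.
    by have := key u v uF gvu; rewrite /A /comp_after_removal !inE => <-; rewrite vA.
  rewrite inE.
  case uF: (u \in F); rewrite ?andbF //.
  case gvu: (g v u) => //=.
  by have := key u v uF gvu; rewrite /A /comp_after_removal !inE => <-; rewrite vA.
apply: (Fmin (A :&: F)).
  rewrite properEneq subsetIr andbT.
  case/set0Pn: BF => x; rewrite !inE => /andP [bx xF].
  apply/eqP => E.
  have : x \in A :&: F by rewrite E.
  rewrite !inE => /andP [ax _].
  move/negP: ncab; apply.
  apply: connect_trans ax _. by rewrite g's.
split => // v vAF.
rewrite nb.
case vA: (v \in A); last by rewrite cards0.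
apply: Ff.
by move: vAF; rewrite in_setI vA.
Qed.
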